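(* Fix an integer $N\ge 4$, and let $x_1\le x_2\le\dots\le x_k$ be points of $[0,1]$ with $k<\lfloor N/2\rfloor$. Then there exist two distinct CDFs $F_{\vec B}$ and $F_{\vec C}$, both with scale factor $N$, such that $F_{\vec B}(x_n)=F_{\vec C}(x_n)$ for all $n\in\{1,\dots,k\}$.
   Context: A binary digit vector of length (scale factor) $N\ge3$ is $\vec B=(b_0,\dots,b_{N-1})\in\{0,1\}^N$ with $2\le\|\vec B\|:=\sum_i b_i\le N-1$; its digit set is $D=\{i:b_i=1\}$. With $\phi_d(x)=(x+d)/N$ for $d\in D$, let $\mu_{\vec B}$ be the unique Borel probability measure with $\mu_{\vec B}=\frac{1}{\|\vec B\|}\sum_{d\in D}\mu_{\vec B}\circ\phi_d^{-1}$, supported on the attractor $C_{\vec B}\subset[0,1]$. The CDF with scale factor $N$ associated to $\vec B$ is $F_{\vec B}(x)=\mu_{\vec B}([0,x])$, $x\in[0,1]$. *)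

(* Defs.v *)
From HB Require Import structures.
From mathcomp Require Import all_boot all_order all_algebra.
From mathcomp Require Import all_classical all_reals all_analysis.
Set Implicit Arguments. Unset Strict Implicit. Unset Printing Implicit Defensive.
Import Order.TTheory GRing.Theory Num.Theory.
Local Open Scope classical_set_scope.
Local Open Scope ring_scope.

Definition digit_vec (N : nat) := {ffun 'I_N -> bool}.

Definition dnorm (N : nat) (B : digit_vec N) : nat := #|[set i | B i]|.

Definition admissible (N : nat) (B : digit_vec N) : Prop :=
  (3 <= N)%N /\ (2 <= dnorm B)%N /\ (dnorm B <= N.-1)%N.

Definition phi (R : realType) (N : nat) (d : nat) (x : R) : R :=
  (x + d%:R) / N%:R.

Definition selfsim (R : realType) (N : nat) (B : digit_vec N)
    (mu : probability R R) : Prop :=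
  forall A : set R, measurable A ->
    mu A = (\sum_(d < N | B d)
              (((dnorm B)%:R : R)^-1)%:E * mu (phi N d @^-1` A))%E.

Definition bcdf (R : realType) (mu : probability R R) (x : R) : R :=
  fine (mu [set y | 0 <= y <= x]).

(* Main.v *)
Require Import Defs.
From HB Require Import structures.
From mathcomp Require Import all_boot all_order all_algebra.
From mathcomp Require Import all_classical all_reals all_analysis.
From mathcomp Require Import lra measurable_realfun zify.
Import Order.TTheory GRing.Theory Num.Theory.
Local Open Scope classical_set_scope.
Local Open Scope ring_scope.

Section S.
Variables (R : realType) (N : nat) (B : digit_vec N) (mu : probability R R).
Hypothesis hN : (1 < N)%N.
Hypothesis hB : (0 < dnorm B)%N.
Hypothesis hs : selfsim B mu.

Let P (A : set R) : R := fine (mu A).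

Lemma mu_fin A : measurable A -> mu A = (P A)%:E.
Proof. move=> mA; rewrite /P fineK // ge0_fin_numE // (le_lt_trans (probability_le1 _ mA)) ?ltry //.
Qed.

Lemma P_ge0 A : 0 <= P A.
Proof. by rewrite /P fine_ge0. Qed.

Lemma P_le1 A : measurable A -> P A <= 1.
Proof. move=> mA; have := probability_le1 mu mA; rewrite mu_fin // lee_fin. Qed.

Lemma P_le A C : measurable A -> measurable C -> A `<=` C -> P A <= P C.
Proof.
move=> mA mC AC; have h : (mu A <= mu C)%E by apply: le_measure => //; rewrite inE.
by move: h; rewrite !mu_fin // lee_fin.
Qed.

Lemma PT : P setT = 1.
Proof. by rewrite /P probability_setT. Qed.

Lemma PU A C : measurable A -> measurable C -> P (A `|` C) <= P A + P C.
Proof.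
move=> mA mC; have h : (mu (A `|` C) <= mu A + mu C)%E by exact: measureU2.
by move: h; rewrite !mu_fin ?lee_fin //; exact: measurableU.
Qed.

Lemma phi_meas d (A : set R) : measurable A -> measurable (phi N d @^-1` A).
Proof.
move=> mA.
have mf : measurable_fun setT (@phi R N d).
  by apply: measurable_funM => //; apply: measurable_funD.
by rewrite -[_ @^-1` _]setTI; apply: mf.
Qed.

Lemma selfsimR (A : set R) : measurable A ->
  P A = \sum_(d < N | B d) (dnorm B)%:R^-1 * P (phi N d @^-1` A).
Proof.
move=> mA; rewrite {1}/P hs //.
rewrite (eq_bigr (fun d : 'I_N => ((dnorm B)%:R^-1 * P (phi N d @^-1` A))%:E)).
  by rewrite sumEFin.
by move=> d _; rewrite mu_fin //; apply: phi_meas.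
Qed.

Lemma dnormE : dnorm B = #|[pred i | B i]|.
Proof. by apply: eq_card => d; rewrite !inE; apply/idP/idP => [/set_mem|/mem_set]. Qed.

Lemma sum_avg (c : R) : \sum_(d < N | B d) (dnorm B)%:R^-1 * c = c.
Proof.
rewrite (eq_bigl (fun d => d \in [pred i | B i])) // sumr_const -dnormE.
rewrite -[_ *+ dnorm B]mulr_natr mulrAC mulVf ?mul1r // pnatr_eq0 -lt0n //.
Qed.


Definition O (r : R) := [set y : R | y < - r \/ 1 + r < y].

Lemma mO r : measurable (O r).
Proof.
have -> : O r = [set` `]-oo, - r[] `|` [set` `]1 + r, +oo[].
  by apply/seteqP; split => y /=; rewrite !in_itv /= ?andbT.
by apply: measurableU; apply: measurable_itv.
Qed.

Lemma Nr_gt0 : 0 < N%:R :> R.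
Proof. by rewrite ltr0n; apply: ltn_trans hN. Qed.

Lemma O_step r : 0 <= r -> P (O r) <= P (O (N%:R * r)).
Proof.
move=> r0; rewrite selfsimR; last exact: mO.
apply: (@le_trans _ _ (\sum_(d < N | B d) (dnorm B)%:R^-1 * P (O (N%:R * r)))); last by rewrite sum_avg.
apply: ler_sum => d Bd; apply: ler_wpM2l; first by rewrite invr_ge0 ler0n.
apply: P_le; [by apply: phi_meas; apply: mO | by apply: mO |].
have hd : (d.+1%:R <= N%:R :> R) by rewrite ler_nat ltn_ord.
have d0 : (0 <= d%:R :> R) by rewrite ler0n.
have N0 := Nr_gt0.
move=> y; rewrite /phi /O /= => -[h|h].
  left; move: h; rewrite ltr_pdivrMr // => h.
  rewrite -natr1 in hd; nra.
right; move: h; rewrite ltr_pdivlMr // => h.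
rewrite -natr1 in hd; nra.
Qed.

Lemma O_iter r n : 0 <= r -> P (O r) <= P (O (N%:R ^+ n * r)).
Proof.
move=> r0; elim: n => [|n IH]; first by rewrite expr0 mul1r.
apply: (le_trans IH); rewrite exprS -mulrA; apply: O_step.
by rewrite mulr_ge0 // exprn_ge0 // ler0n.
Qed.

Lemma O_mono r s : r <= s -> O s `<=` O r.
Proof. by move=> rs y [h|h]; [left|right]; lra. Qed.

Lemma O_pos r : 0 < r -> mu (O r) = 0%E.
Proof.
move=> r0.
pose F n := O (n%:R * r).
have mF n : measurable (F n) by exact: mO.
have niF : nonincreasing_seq F.
  move=> n m nm; rewrite subsetEset; apply: O_mono.
  by rewrite ler_pM2r // ler_nat.
have cap0 : \bigcap_n F n = set0.
  apply/seteqP; split => // y /= hy.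
  have ry : 0 <= `|y| / r by rewrite divr_ge0 // ltW.
  have := hy (Num.truncn (`|y| / r)).+1 I; rewrite /F /O /=.
  have := truncnS_gt (`|y| / r); rewrite ltr_pdivrMr // => h1.
  have h2 := ler_norm y; have h3 : - y <= `|y| by rewrite -normrN ler_norm.
  move=> [] h; lra.
have cF := nonincreasing_cvg_mu (F := F) (mu := mu) _ mF _ niF.
rewrite cap0 measure0 in cF.
have hF : (mu (F 0%N) < +oo)%E.
  by rewrite (le_lt_trans (probability_le1 _ (mF 0%N))) ?ltry.
have {}cF := cF hF measurable0.
apply/eqP; rewrite eq_le measure_ge0 andbT.
rewrite -(cvg_lim _ cF) //; apply: lime_ge; first by apply/cvg_ex; exists 0%E.
apply: nearW => n /=. have e1 := mu_fin _ (mO r). have e2 := mu_fin _ (mO (n%:R * r)). rewrite /F e1 e2 lee_fin.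
apply: (le_trans (O_iter r n (ltW r0))); apply: P_le; [exact: mO|exact: mO|].
apply: O_mono; rewrite ler_pM2r // -natrX ler_nat; exact/ltnW/ltn_expl.
Qed.

Lemma small_inv (t : R) : 0 < t -> exists n, (n.+1%:R)^-1 < t.
Proof.
move=> t0; exists (Num.truncn t^-1).
have h := truncnS_gt t^-1.
by rewrite invf_plt ?posrE ?ltr0n.

Qed.

Lemma O0 : mu (O 0) = 0%E.
Proof.
have -> : O 0 = \bigcup_n O (n.+1%:R)^-1.
  apply/seteqP; split => y /=; last first.
    by move=> [n _]; apply: O_mono; rewrite invr_ge0 ler0n.
  rewrite /O oppr0 addr0 => -[h|h].
    have [|n hn] := small_inv (- y); first lra.
    by exists n => //; rewrite /O /=; left; rewrite ltrNr.
  have [|n hn] := small_inv (y - 1); first lra.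
  by exists n => //; rewrite /O /=; right; move: hn; set u := _^-1 => hn; lra.
apply/negligibleP; first by apply: bigcupT_measurable => n; exact: mO.
apply: negligible_bigcup => n; apply/negligibleP; first exact: mO.
by apply: O_pos; rewrite invr_gt0 ltr0n.
Qed.

Lemma P_null (S : set R) : measurable S -> S `<=` O 0 -> P S = 0.
Proof.
move=> mS SO; apply/eqP; rewrite eq_le P_ge0 andbT.
have := P_le _ _ mS (mO 0) SO; rewrite {2}/P O0 /=; exact.
Qed.

Lemma P_full (S : set R) : measurable S -> [set y | 0 <= y <= 1] `<=` S -> P S = 1.
Proof.
move=> mS IS; apply/eqP; rewrite eq_le P_le1 //=.
have h0 : P (O 0) = 0 by rewrite /P O0.
have : P setT <= P (S `|` O 0).
  apply: P_le => //; first by apply: measurableU => //; exact: mO.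
  move=> y _; have [y0|y0] := ltP y 0; first by right; left; lra.
  have [y1|y1] := ltP 1 y; first by right; right; lra.
  by left; apply: IS; rewrite /= y0 y1.
rewrite PT => h; apply: (le_trans h); apply: (le_trans (PU _ _ mS (mO 0))).
by rewrite h0 addr0.
Qed.


Lemma mI (x : R) : measurable [set y : R | 0 <= y <= x].
Proof.
have -> : [set y : R | 0 <= y <= x] = [set` `[0, x]] by apply/seteqP; split => y /=; rewrite in_itv.
exact: measurable_itv.
Qed.

Lemma term1 (d : nat) x : (d < N)%N -> d.+1%:R <= N%:R * x ->
  P (phi N d @^-1` [set y | 0 <= y <= x]) = 1.
Proof.
move=> dN h; apply: P_full; first by apply: phi_meas; apply: mI.
have N0 := Nr_gt0.
move=> y /= /andP[y0 y1]; rewrite /phi divr_ge0 ?addr_ge0 ?ler0n //=.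
rewrite ler_pdivrMr //; rewrite -natr1 in h; nra.
Qed.

Lemma term0 (d : nat) x : N%:R * x < d%:R ->
  P (phi N d @^-1` [set y | 0 <= y <= x]) = 0.
Proof.
move=> h; apply: P_null; first by apply: phi_meas; apply: mI.
have N0 := Nr_gt0.
move=> y /= /andP[y0 y1]; left; move: y1; rewrite /phi ler_pdivrMr // => y1.
rewrite oppr0; nra.
Qed.

Lemma termv (d : nat) x : (d < N)%N -> 0 <= x -> d != Num.truncn (N%:R * x) ->
  P (phi N d @^-1` [set y | 0 <= y <= x]) = if (d < Num.truncn (N%:R * x))%N then 1 else 0.
Proof.
move=> dN x0 dj; have Nx0 : 0 <= N%:R * x by rewrite mulr_ge0 ?ler0n.
case: ifP => h.
  by apply: term1 => //; rewrite -truncn_ge_nat.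
apply: term0; rewrite -truncn_lt_nat //.
by rewrite ltn_neqAle eq_sym dj /= leqNgt h.
Qed.

End S.

Definition dv2 (N e g : nat) : digit_vec N :=
  [ffun d : 'I_N => (val d == e) || (val d == g)].

Lemma dnorm_dv2 N e g : (e < N)%N -> (g < N)%N -> e != g -> dnorm (dv2 N e g) = 2%N.
Proof.
move=> he hg neq; rewrite dnormE.
rewrite (@eq_card _ _ (pred2 (Ordinal he) (Ordinal hg))); last first.
  by move=> i; rewrite !inE ffunE -!val_eqE.
by rewrite card2 -val_eqE /= neq.
Qed.

Lemma sum_dv2 (R : realType) N e g (he : (e < N)%N) (hg : (g < N)%N) (F : nat -> R) :
  e != g -> \sum_(d < N | dv2 N e g d) F d = F e + F g.
Proof.
move=> neq; rewrite (bigD1 (Ordinal he)) /=; last by rewrite ffunE eqxx.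
congr (_ + _); rewrite (big_pred1 (Ordinal hg)) // => i /=.
rewrite ffunE -!val_eqE /=.
case: (val i =P e) => [->|_] /=; first by apply/esym/negbTE.
by rewrite andbT.
Qed.

Section T.
Variables (R : realType) (N e g : nat) (mu : probability R R).
Hypotheses (hN : (1 < N)%N) (he : (e < N)%N) (hg : (g < N)%N) (neq : e != g)
  (hs : selfsim (dv2 N e g) mu).

Lemma hB2 : (0 < dnorm (dv2 N e g))%N.
Proof. by rewrite dnorm_dv2. Qed.

Lemma self2 (A : set R) : measurable A ->
  fine (mu A) = 2^-1 * (fine (mu (phi N e @^-1` A)) + fine (mu (phi N g @^-1` A))).
Proof.
move=> mA; rewrite (selfsimR _ _ _ _ hs _ mA) dnorm_dv2 //.
rewrite (sum_dv2 _ _ _ _ he hg (fun d => 2%:R^-1 * fine (mu (phi N d @^-1` A)))) //.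
by rewrite mulrDr.
Qed.

Lemma cdf2_val x : 0 <= x -> e != Num.truncn (N%:R * x) -> g != Num.truncn (N%:R * x) ->
  bcdf mu x = 2^-1 * ((if (e < Num.truncn (N%:R * x))%N then 1 else 0)
                     + (if (g < Num.truncn (N%:R * x))%N then 1 else 0)).
Proof.
move=> x0 ej gj; rewrite /bcdf self2; last exact: mI.
by rewrite (termv _ _ _ _ hN hB2 hs _ _ he x0 ej) (termv _ _ _ _ hN hB2 hs _ _ hg x0 gj).
Qed.

Lemma atom_t : (0 < e)%N ->
  fine (mu (phi N e @^-1` [set y | 0 <= y <= e%:R / N%:R])) <= 2^-1.
Proof.
move=> e0.
have mS : measurable (phi N e @^-1` [set y : R | 0 <= y <= e%:R / N%:R]).
  by apply: phi_meas; apply: mI.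
rewrite self2 //.
have N0 := Nr_gt0 R _ hN.
rewrite (P_null _ _ _ _ hN hB2 hs); last first.
  move=> y /= /andP[_]; rewrite /phi ler_pdivrMr // divfK ?gt_eqF // => h.
  have h2 : (y + e%:R) / N%:R <= 0 by lra.
  move: h2; rewrite ler_pdivrMr // mul0r => h2.
  have h3 : (1 <= e%:R :> R) by rewrite ler1n.
  rewrite /O /=; left; rewrite oppr0; lra.
  by apply: phi_meas.
rewrite add0r; have := P_le1 _ mu _ (phi_meas _ N g _ mS).
rewrite -[X in _ -> _ <= X]mulr1 => h; apply: ler_wpM2l => //; by rewrite invr_ge0 ler0n.
Qed.

End T.

Lemma pick_digits N k (h : 'I_k -> nat) : (4 <= N)%N -> (k < N./2)%N ->
  exists e g, [/\ (e.+1 < N)%N, (g < N)%N, g != e, g != e.+1 &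
    forall i, [&& h i != e, h i != e.+1 & h i != g]].
Proof.
move=> N4 kN.
pose L := map (fun i => (h i)./2) (enum 'I_k).
have [/hasP [t tI tL]|/hasPn hL] := boolP (has (fun t => t \notin L) (iota 0 N./2)); last first.
  have := uniq_leq_size (iota_uniq 0 N./2) (fun t ti => negbNE (hL t ti)).
  by rewrite size_iota size_map size_enum_ord; lia.
rewrite mem_iota add0n in tI.
pose e := t.*2.
pose L2 := e :: e.+1 :: map h (enum 'I_k).
have [/hasP [g gI gL]|/hasPn hL] := boolP (has (fun g => g \notin L2) (iota 0 N)); last first.
  have := uniq_leq_size (iota_uniq 0 N) (fun t ti => negbNE (hL t ti)).
  by rewrite size_iota /= size_map size_enum_ord; lia.
rewrite mem_iota add0n in gI.
exists e, g; split => //; first by rewrite /e; lia.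
- by apply: contraNneq gL => ->; rewrite inE eqxx.
- by apply: contraNneq gL => ->; rewrite !inE eqxx orbT.
move=> i.
have hi : (h i)./2 != t.
  by apply: contraNneq tL => <-; apply/mapP; exists i; rewrite ?mem_enum.
have gi : h i != g.
  by apply: contraNneq gL => <-; rewrite !inE; apply/orP; right; apply/orP; right; apply/mapP; exists i; rewrite ?mem_enum.
rewrite gi andbT /e; apply/andP; split; apply: contraNneq hi => ->.
  by rewrite doubleK.
by rewrite -addn1 halfD odd_double doubleK /= addn0.
Qed.

Theorem lemma2p5 (R : realType) (N k : nat) (x : 'I_k -> R) :
  (4 <= N)%N ->
  (k < N./2)%N ->
  (forall i, 0 <= x i <= 1) ->
  (forall i j : 'I_k, (i <= j)%N -> x i <= x j) ->
  exists B C : digit_vec N, admissible B /\ admissible C /\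
    forall (muB muC : probability R R), selfsim B muB -> selfsim C muC ->
      (exists y : R, 0 <= y <= 1 /\ bcdf muB y <> bcdf muC y) /\
      (forall i, bcdf muB (x i) = bcdf muC (x i)).
Proof.
move=> N4 kN x01 _.
have hN : (1 < N)%N by lia.
pose h i := Num.truncn (N%:R * x i).
have [e [g [eN gN ge ge1 hi]]] := pick_digits _ _ h N4 kN.
have eN' : (e < N)%N by lia.
have eg : e != g by rewrite eq_sym.
have eg1 : e.+1 != g by rewrite eq_sym.
exists (dv2 N e g), (dv2 N e.+1 g).
split; first by rewrite /admissible dnorm_dv2 //; split => //; [lia|split => //; lia].
split; first by rewrite /admissible dnorm_dv2 //; split => //; [lia|split => //; lia].
move=> muB muC sB sC.
have N0 := Nr_gt0 R _ hN.
split.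
  exists (e.+1%:R / N%:R).
  have y0 : 0 <= e.+1%:R / N%:R :> R by rewrite divr_ge0 ?ler0n.
  split.
    by rewrite y0 /= ler_pdivrMr // mul1r ler_nat.
  have Ny : N%:R * (e.+1%:R / N%:R) = e.+1%:R :> R by rewrite mulrC divfK ?gt_eqF.
  have tj : Num.truncn (N%:R * (e.+1%:R / N%:R) : R) = e.+1 by rewrite Ny natrK.
  rewrite (cdf2_val _ _ _ _ _ hN eN' gN eg sB _ y0); rewrite ?tj //; last first.
    by rewrite neq_ltn ltnSn.
  rewrite /bcdf (self2 _ _ _ _ _ eN gN eg1 sC _ (mI _ _)).
  rewrite (termv _ _ _ _ hN (hB2 _ _ _ eN gN eg1) sC _ _ gN y0); rewrite ?tj //.
  have := atom_t _ _ _ _ _ hN eN gN eg1 sC (ltn0Sn e).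
  rewrite ltnSn.
  set t := fine _; set c := (if _ then _ else _) => ht.
  have c0 : 0 <= c by rewrite /c; case: ifP.
  move=> E; lra.
move=> i; have /andP[x0 _] := x01 i.
have /and3P[j1 j2 j3] := hi i.
rewrite /h in j1 j2 j3.
rewrite (cdf2_val _ _ _ _ _ hN eN' gN eg sB _ x0) 1?eq_sym //.
rewrite (cdf2_val _ _ _ _ _ hN eN gN eg1 sC _ x0) 1?eq_sym //.
congr (_ * (_ + _)); congr (if _ then _ else _).
by rewrite [in LHS]leq_eqVlt eq_sym (negbTE j2).
Qed.
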